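(* Let $B\colon(\mathbf{Set}^{\mathsf{Ty}})^{op}\times\mathbf{Set}^{\mathsf{Ty}}\to\mathbf{Set}^{\mathsf{Ty}}$ be the bifunctor with $B_{\mathsf{unit}}(X,Y)=Y_{\mathsf{unit}}+1$ and $B_{\tau_1\to\tau_2}(X,Y)=Y_{\tau_1\to\tau_2}+Y_{\tau_2}^{X_{\tau_1}}$. Then: (1) $B$ is locally contractive in the first argument and locally non-expansive in the second argument; (2) the hom-set $\mathbf{Set}^{\mathsf{Ty}}(1,B(1,1))$ is inhabited; (3) for each $X\in\mathbf{Set}^{\mathsf{Ty}}$ the final sequence of the endofunctor $B(X,-)$ converges.
   Context: $\mathsf{Ty}$ is the set of types generated by $\tau::=\mathsf{unit}\mid\tau\to\tau$; the complexity is $|\mathsf{unit}|=1$, $|\tau_1\to\tau_2|=|\tau_1|+|\tau_2|$. $\mathbf{Set}^{\mathsf{Ty}}$ is the category of $\mathsf{Ty}$-sorted sets and sortwise maps, $1$ the terminal object (singleton at each sort); on morphisms $B$ acts by $B_{\mathsf{unit}}(f,g)=g_{\mathsf{unit}}+\mathrm{id}$ and $B_{\tau_1\to\tau_2}(f,g)=g_{\tau_1\to\tau_2}+(h\mapsto g_{\tau_2}\cdot h\cdot f_{\tau_1})$. Each hom-set carries the metric $d(f,g)=\sup\{2^{-(|\tau|-1)}\mid\tau\in\mathsf{Ty},f_\tau\ne g_\tau\}$ (with $\sup\emptyset=0$). $B$ is locally contractive in the first argument if there is $c\in[0,1)$ with $d(B(f,\mathrm{id}_Y),B(g,\mathrm{id}_Y))\le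 c\cdot d(f,g)$ for all $Y$ and $f,g\colon X\to X'$; locally non-expansive in the second argument if $d(B(\mathrm{id}_X,f),B(\mathrm{id}_X,g))\le d(f,g)$. The final sequence of an endofunctor $H$ is the ordinal-indexed diagram with $D_0=1$, $D_{\alpha+1}=HD_\alpha$, $D_{1,0}\colon H1\to1$ unique, $D_{\alpha+1,\beta+1}=HD_{\alpha,\beta}$, and $D_\alpha=\lim_{\beta<\alpha}D_\beta$ at limit ordinals; it converges if $D_{\alpha+1,\alpha}$ is an isomorphism for some $\alpha$. *)

(* Defs.v *)
From mathcomp Require Import all_boot all_order all_algebra.
From Stdlib Require Rdefinitions.
From mathcomp Require Import classical_sets reals Rstruct.
Notation R := Rdefinitions.R.
Set Implicit Arguments. Unset Strict Implicit. Unset Printing Implicit Defensive.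
Import Order.TTheory GRing.Theory Num.Theory.

Inductive Ty : Type := TUnit | TArr of Ty & Ty.

Fixpoint cplx (t : Ty) : nat :=
  match t with TUnit => 1 | TArr t1 t2 => cplx t1 + cplx t2 end.

(** The category Set^Ty: Ty-sorted sets and sortwise maps. *)
Definition tyset := Ty -> Type.
Definition tyhom (X Y : tyset) := forall t : Ty, X t -> Y t.
Definition tyid (X : tyset) : tyhom X X := fun t x => x.
Definition tycomp (X Y Z : tyset) (g : tyhom Y Z) (f : tyhom X Y) : tyhom X Z :=
  fun t x => g t (f t x).
Definition tyone : tyset := fun _ => unit.
Definition tybang (X : tyset) : tyhom X tyone := fun _ _ => tt.
Arguments tyid : clear implicits.
Arguments tybang : clear implicits.
Arguments tycomp [X Y Z] g f.

Definition is_iso (X Y : tyset) (f : tyhom X Y) : Prop :=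
  exists g : tyhom Y X,
    (forall t x, g t (f t x) = x) /\ (forall t y, f t (g t y) = y).

Definition B (X Y : tyset) : tyset := fun t =>
  match t with
  | TUnit => (Y TUnit + unit)%type
  | TArr t1 t2 => (Y (TArr t1 t2) + (X t1 -> Y t2))%type
  end.

Definition Bmap (X X' Y Y' : tyset) (f : tyhom X' X) (g : tyhom Y Y')
  : tyhom (B X Y) (B X' Y') := fun t =>
  match t as t0 return B X Y t0 -> B X' Y' t0 with
  | TUnit => fun s => match s with inl y => inl (g TUnit y) | inr u => inr u end
  | TArr t1 t2 => fun s => match s with
      | inl y => inl (g (TArr t1 t2) y)
      | inr h => inr (fun x => g t2 (h (f t1 x)))
      end
  end.

(** metric on hom-sets: d(f,g) = sup { 2^-(|t|-1) | f_t <> g_t }, sup of empty = 0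
    (mathcomp-analysis' [sup] returns 0 on the empty set). *)
Local Open Scope classical_set_scope.
Local Open Scope ring_scope.
Definition tydist (X Y : tyset) (f g : tyhom X Y) : R :=
  sup [set r : R | exists t : Ty, f t <> g t /\ r = (2 : R) ^- (cplx t).-1].

Definition locally_contractive_fst : Prop :=
  exists c : R, 0 <= c /\ c < 1 /\
    forall (X X' Y : tyset) (f g : tyhom X' X),
      tydist (Bmap f (tyid Y)) (Bmap g (tyid Y)) <= c * tydist f g.

Definition locally_nonexpansive_snd : Prop :=
  forall (X Y Y' : tyset) (f g : tyhom Y Y'),
    tydist (Bmap (tyid X) f) (Bmap (tyid X) g) <= tydist f g.

Unset Implicit Arguments.

(** Final sequence of H := B(X,-), stages 0 .. omega+1.
    D_0 = 1, D_{n+1} = H D_n, D_{1,0} = !, D_{n+2,n+1} = H D_{n+1,n}. *)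
Fixpoint fseq (X : tyset) (n : nat) : tyset :=
  match n with O => tyone | S m => B X (fseq X m) end.

Fixpoint fseq_step (X : tyset) (n : nat) : tyhom (fseq X n.+1) (fseq X n) :=
  match n as n0 return tyhom (fseq X n0.+1) (fseq X n0) with
  | O => tybang _
  | S m => Bmap (tyid X) (fseq_step X m)
  end.

(** D_omega = lim_{n<omega} D_n (sortwise: compatible families). *)
Definition fseq_omega (X : tyset) : tyset := fun t =>
  { x : forall n, fseq X n t | forall n, fseq_step X n t (x n.+1) = x n }.

Definition fseq_omega_proj (X : tyset) (n : nat) : tyhom (fseq_omega X) (fseq X n) :=
  fun t x => proj1_sig x n.

Definition fseq_omega1_proj (X : tyset) (n : nat)
  : tyhom (B X (fseq_omega X)) (fseq X n) :=
  match n as n0 return tyhom (B X (fseq_omega X)) (fseq X n0) with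
  | O => tybang _
  | S m => Bmap (tyid X) (fseq_omega_proj X m)
  end.

Lemma fseq_omega1_compat (X : tyset) (n : nat) (t : Ty) (x : B X (fseq_omega X) t) :
  fseq_step X n t (fseq_omega1_proj X n.+1 t x) = fseq_omega1_proj X n t x.
Proof.
case: n => [|n] //=.
case: t x => [|t1 t2] [y|h] //=; rewrite /fseq_omega_proj ?(proj2_sig y) //.
congr inr; apply: boolp.funext => z; exact: (proj2_sig (h z)).
Qed.

(** D_{omega+1,omega} : H D_omega -> D_omega, the unique map into the limit
    commuting with the projections. *)
Definition fseq_omega_step (X : tyset) : tyhom (B X (fseq_omega X)) (fseq_omega X) :=
  fun t x => exist (fun y : forall n, fseq X n t =>
                           forall n, fseq_step X n t (y n.+1) = y n)
                    (fun n => fseq_omega1_proj X n t x)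
                    (fun n => fseq_omega1_compat X n t x).

(** the final sequence converges (at some stage alpha <= omega) *)
Definition final_seq_converges (X : tyset) : Prop :=
  (exists n : nat, is_iso (fseq_step X n)) \/ is_iso (fseq_omega_step X).

(* Main.v *)
Require Import Defs.
From mathcomp Require Import all_boot all_order all_algebra.
From mathcomp Require Import classical_sets reals Rstruct.
From mathcomp Require Import boolp zify.
Import Order.TTheory GRing.Theory Num.Theory.

Module P1.
Local Open Scope classical_set_scope.
Local Open Scope ring_scope.
Definition wt (t : Ty) : R := (2 : R) ^- (cplx t).-1.
Definition SP (P : Ty -> Prop) : set R := [set r : R | exists t : Ty, P t /\ r = wt t].

Lemma half_ge0 : 0 <= (2 : R)^-1. Proof. by rewrite invr_ge0. Qed.
Lemma half_le1 : (2 : R)^-1 <= 1. Proof. by rewrite invf_le1 // ler1n. Qed.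

Lemma wtE t : wt t = (2 : R)^-1 ^+ (cplx t).-1.
Proof. by rewrite /wt exprVn. Qed.

Lemma wt_ge0 t : 0 <= wt t.
Proof. by rewrite wtE exprn_ge0 // half_ge0. Qed.
Lemma wt_le1 t : wt t <= 1.
Proof. by rewrite wtE exprn_ile1 // ?half_ge0 ?half_le1. Qed.

Lemma wt_mono m n : (m <= n)%N -> (2 : R)^-1 ^+ n <= (2 : R)^-1 ^+ m.
Proof. by move=> h; apply: ler_wiXn2l => //; [exact: half_ge0|exact: half_le1]. Qed.

Lemma cplx_gt0 t : (0 < cplx t)%N.
Proof. elim: t => //= t1 IH1 t2 IH2; by rewrite addn_gt0 IH1. Qed.

Lemma SP_ub P : ubound (SP P) 1.
Proof. by move=> r [t [_ ->]]; exact: wt_le1. Qed.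

Lemma SP_ge0 P : 0 <= sup (SP P).
Proof.
have [[t Pt]|nP] := pselect (exists t, P t).
  apply: le_trans (wt_ge0 t) _.
  apply: ub_le_sup; first by exists 1; exact: SP_ub.
  by exists t.
have -> : SP P = set0.
  by apply/seteqP; split => r // [t [Pt _]]; case: nP; exists t.
by rewrite sup0.
Qed.

Lemma SP_cmp (P Q : Ty -> Prop) (c : R) : 0 <= c ->
  (forall t, P t -> exists t', Q t' /\ wt t <= c * wt t') ->
  sup (SP P) <= c * sup (SP Q).
Proof.
move=> c0 H.
have [[t Pt]|nP] := pselect (exists t, P t).
  apply: ge_sup; first by exists (wt t), t.
  move=> r [t1 [Pt1 ->]].
  have [t' [Qt' le]] := H t1 Pt1.
  apply: le_trans le _; apply: ler_wpM2l => //.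
  apply: ub_le_sup; first by exists 1; exact: SP_ub.
  by exists t'.
have -> : SP P = set0.
  by apply/seteqP; split => r // [t [Pt _]]; case: nP; exists t.
by rewrite sup0 mulr_ge0 // SP_ge0.
Qed.
Lemma contr : locally_contractive_fst.
Proof.
exists (2 : R)^-1; split; first exact: half_ge0.
split; first by rewrite invf_lt1 // ltr1n.
move=> X X' Y f g.
apply: (@SP_cmp (fun t => @Bmap _ _ _ _ f (tyid Y) t <> @Bmap _ _ _ _ g (tyid Y) t) (fun t => f t <> g t) _ half_ge0) => -[|t1 t2] H; first by case: H.
exists t1; split.
  move=> E; apply: H; rewrite /Bmap /=; by rewrite E.
rewrite !wtE -exprS; apply: wt_mono.
have := cplx_gt0 t1; have := cplx_gt0 t2; rewrite /=; lia.
Qed.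

Lemma nonexp : locally_nonexpansive_snd.
Proof.
move=> X Y Y' f g.
rewrite -[tydist f g]mul1r.
apply: (@SP_cmp (fun t => @Bmap _ _ _ _ (tyid X) f t <> @Bmap _ _ _ _ (tyid X) g t) (fun t => f t <> g t) _ ler01) => -[|t1 t2] H.
  exists TUnit; split; last by rewrite mul1r.
  move=> E; apply: H; rewrite /Bmap /=; by rewrite E.
have [E1|N1] := pselect (f (TArr t1 t2) = g (TArr t1 t2)).
  exists t2; split.
    move=> E2; apply: H; rewrite /Bmap /=; by rewrite E1 E2.
  rewrite mul1r !wtE; apply: wt_mono.
  have := cplx_gt0 t1; have := cplx_gt0 t2; rewrite /=; lia.
by exists (TArr t1 t2); split; last by rewrite mul1r.
Qed.
End P1.
Fixpoint dflt (X : tyset) (n : nat) (t : Ty) : fseq X n t :=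
  match n as n0 return fseq X n0 t with
  | O => tt
  | S m => match t as t0 return B X (fseq X m) t0 with
           | TUnit => inr tt
           | TArr t1 t2 => inl (dflt X m (TArr t1 t2))
           end
  end.

Lemma sigE (X : tyset) (t : Ty) (x y : fseq_omega X t) :
  proj1_sig x = proj1_sig y -> x = y.
Proof.
case: x y => x px [y py] /= E; subst y; congr exist; exact: Prop_irrelevance.
Qed.

Lemma surj_unit (X : tyset) (z : fseq_omega X TUnit) :
  exists b, fseq_omega_step X TUnit b = z.
Proof.
case: z => x px.
have step_inr n u : (x n.+2 : fseq X n.+1 TUnit + unit) = inr u ->
    (x n.+1 : fseq X n TUnit + unit) = inr u.
  by move=> E; rewrite -(px n.+1) /= E.
have step_inl n a : (x n.+2 : fseq X n.+1 TUnit + unit) = inl a ->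
    (x n.+1 : fseq X n TUnit + unit) = inl (fseq_step X n TUnit a).
  by move=> E; rewrite -(px n.+1) /= E.
case E1: (x 1 : fseq X 0 TUnit + unit) => [a|u].
- have L n : exists a, (x n.+1 : fseq X n TUnit + unit) = inl a.
    elim: n => [|n [a' IH]]; first by exists a.
    case E: (x n.+2 : fseq X n.+1 TUnit + unit) => [a''|u']; first by exists a''.
    by move: (step_inr _ _ E); rewrite IH.
  pose y n : fseq X n TUnit :=
    match (x n.+1 : fseq X n TUnit + unit) with inl a => a | inr _ => dflt X n TUnit end.
  have Hy n : (x n.+1 : fseq X n TUnit + unit) = inl (y n).
    by case: (L n) => a' E; rewrite /y E.
  have py n : fseq_step X n TUnit (y n.+1) = y n.
    by move: (step_inl _ _ (Hy n.+1)); rewrite Hy => -[].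
  exists (inl (exist _ y py)).
  apply: sigE => /=; apply: functional_extensionality_dep => -[|n] /=.
    by case: (x 0).
  by rewrite Hy.
- have L n : (x n.+1 : fseq X n TUnit + unit) = inr tt.
    elim: n => [|n IH]; first by case: u E1.
    case E: (x n.+2 : fseq X n.+1 TUnit + unit) => [a'|u'].
      by move: (step_inl _ _ E); rewrite IH.
    by case: u' E.
  exists (inr tt).
  apply: sigE => /=; apply: functional_extensionality_dep => -[|n] /=.
    by case: (x 0).
  by rewrite L.
Qed.

Lemma surj_arr (X : tyset) t1 t2 (z : fseq_omega X (TArr t1 t2)) :
  exists b, fseq_omega_step X (TArr t1 t2) b = z.
Proof.
case: z => x px.
have step_inr n u : (x n.+2 : fseq X n.+1 (TArr t1 t2) + (X t1 -> fseq X n.+1 t2)) = inr u ->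
    (x n.+1 : fseq X n (TArr t1 t2) + (X t1 -> fseq X n t2)) = inr (fun x0 => fseq_step X n t2 (u x0)).
  by move=> E; rewrite -(px n.+1) /= E.
have step_inl n a : (x n.+2 : fseq X n.+1 (TArr t1 t2) + (X t1 -> fseq X n.+1 t2)) = inl a ->
    (x n.+1 : fseq X n (TArr t1 t2) + (X t1 -> fseq X n t2)) = inl (fseq_step X n (TArr t1 t2) a).
  by move=> E; rewrite -(px n.+1) /= E.
case E1: (x 1 : fseq X 0 (TArr t1 t2) + (X t1 -> fseq X 0 t2)) => [a|u].
- have L n : exists a, (x n.+1 : fseq X n (TArr t1 t2) + (X t1 -> fseq X n t2)) = inl a.
    elim: n => [|n [a' IH]]; first by exists a.
    case E: (x n.+2 : fseq X n.+1 (TArr t1 t2) + (X t1 -> fseq X n.+1 t2)) => [a''|u'].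
      by exists a''.
    by move: (step_inr _ _ E); rewrite IH.
  pose y n : fseq X n (TArr t1 t2) :=
    match (x n.+1 : fseq X n (TArr t1 t2) + (X t1 -> fseq X n t2)) with
    | inl a => a | inr _ => dflt X n (TArr t1 t2) end.
  have Hy n : (x n.+1 : fseq X n (TArr t1 t2) + (X t1 -> fseq X n t2)) = inl (y n).
    by case: (L n) => a' E; rewrite /y E.
  have py n : fseq_step X n (TArr t1 t2) (y n.+1) = y n.
    by move: (step_inl _ _ (Hy n.+1)); rewrite Hy => -[].
  exists (inl (exist _ y py)).
  apply: sigE => /=; apply: functional_extensionality_dep => -[|n] /=.
    by case: (x 0).
  by rewrite Hy.
- have L n : exists h, (x n.+1 : fseq X n (TArr t1 t2) + (X t1 -> fseq X n t2)) = inr h.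
    elim: n => [|n [h' IH]]; first by exists u.
    case E: (x n.+2 : fseq X n.+1 (TArr t1 t2) + (X t1 -> fseq X n.+1 t2)) => [a'|u'].
      by move: (step_inl _ _ E); rewrite IH.
    by exists u'.
  pose h n : X t1 -> fseq X n t2 :=
    match (x n.+1 : fseq X n (TArr t1 t2) + (X t1 -> fseq X n t2)) with
    | inl _ => fun _ => dflt X n t2 | inr k => k end.
  have Hh n : (x n.+1 : fseq X n (TArr t1 t2) + (X t1 -> fseq X n t2)) = inr (h n).
    by case: (L n) => a' E; rewrite /h E.
  have ph x0 n : fseq_step X n t2 (h n.+1 x0) = h n x0.
    move: (step_inr _ _ (Hh n.+1)); rewrite Hh => -[] /(congr1 (fun k => k x0)).
    by move=> ->.
  exists (inr (fun x0 => exist _ (fun n => h n x0) (ph x0))).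
  apply: sigE => /=; apply: functional_extensionality_dep => -[|n] /=.
    by case: (x 0).
  by rewrite Hh.
Qed.

Lemma surj_all (X : tyset) t (z : fseq_omega X t) :
  exists b, fseq_omega_step X t b = z.
Proof. case: t z => [|t1 t2] z; [exact: surj_unit | exact: surj_arr]. Qed.

Lemma inj_all (X : tyset) t (a b : B X (fseq_omega X) t) :
  fseq_omega_step X t a = fseq_omega_step X t b -> a = b.
Proof.
move=> E.
have E' n : fseq_omega1_proj X n t a = fseq_omega1_proj X n t b.
  exact: (f_equal (fun z => proj1_sig z n) E).
case: t a b E' {E} => [|t1 t2] [y|h] [y'|h'] E' //.
- congr inl; apply: sigE; apply: functional_extensionality_dep => n.
  by move: (E' n.+1) => /= -[].
- by move: (E' 1).
- by move: (E' 1).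
- by case: h h' E' => [] [].
- congr inl; apply: sigE; apply: functional_extensionality_dep => n.
  by move: (E' n.+1) => /= -[].
- by move: (E' 1).
- by move: (E' 1).
- congr inr; apply: functional_extensionality_dep => x0.
  apply: sigE; apply: functional_extensionality_dep => n.
  by move: (E' n.+1) => /= -[] /(congr1 (fun k => k x0)).
Qed.

Lemma conv (X : tyset) : final_seq_converges X.
Proof.
right.
exists (fun t z => proj1_sig (cid (@surj_all X t z))); split.
- move=> t x; apply: inj_all; exact: (proj2_sig (cid (@surj_all X _ _))).
- move=> t y; exact: (proj2_sig (cid (@surj_all X _ _))).
Qed.

Theorem lemma5p1 :
  (locally_contractive_fst /\ locally_nonexpansive_snd) /\
  inhabited (tyhom tyone (B tyone tyone)) /\
  (forall X : tyset, final_seq_converges X).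
Proof.
split; first by split; [exact: P1.contr | exact: P1.nonexp].
split; last exact: conv.
constructor => -[|t1 t2] _; [exact: inr tt | exact: inl tt].
Qed.
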